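(* Let $1\to B\to A\xrightarrow{\pi}H\to1$ be a central exact sequence of Hopf algebras such that $A$ is noetherian. If $\mathcal{HZ}(H)=k$, then $B=\mathcal{HZ}(A)$.
   Context: Hopf algebras over a field $k$, with bijective antipode. A sequence $1\to B\xrightarrow{\iota}A\xrightarrow{\pi}H\to1$ of Hopf algebra maps is exact if $\iota$ is injective, $\pi$ surjective, $\operatorname{Ker}\pi=AB^+$ ($B^+=\operatorname{Ker}\varepsilon$) and $B={}^{\mathrm{co}\,\pi}A$; it is central if $B$ is central in $A$. $\mathcal{HZ}(A)$ denotes the Hopf center of $A$, i.e. its maximal central Hopf subalgebra. *)

(* Defs.v *)
(* Tensors V (x) W are represented by finite formal sums (seq (V * W));
   two representatives denote the same tensor iff they have the same image
   under every bilinear map into every k-vector space (i.e. the universal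
   property of the tensor product). *)
From HB Require Import structures.
From mathcomp Require Import all_boot all_order all_algebra.
Set Implicit Arguments. Unset Strict Implicit. Unset Printing Implicit Defensive.
Import Order.TTheory GRing.Theory.
Local Open Scope ring_scope.

Section Defs.
Variable k : fieldType.

Definition lin_map (V W : lmodType k) (f : V -> W) : Prop :=
  forall (c : k) (u v : V), f (c *: u + v) = c *: f u + f v.

Definition bilin (V W U : lmodType k) (f : V -> W -> U) : Prop :=
  (forall y, lin_map (fun x => f x y)) /\ (forall x, lin_map (f x)).

Definition trilin (V W X U : lmodType k) (f : V -> W -> X -> U) : Prop :=
  (forall y z, lin_map (fun x => f x y z)) /\
  (forall x z, lin_map (fun y => f x y z)) /\
  (forall x y, lin_map (f x y)).

Definition teq (V W : lmodType k) (s t : seq (V * W)) : Prop :=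
  forall (U : lmodType k) (f : V -> W -> U), bilin f ->
    \sum_(p <- s) f p.1 p.2 = \sum_(p <- t) f p.1 p.2.

Definition teq3 (V W X : lmodType k) (s t : seq ((V * W) * X)) : Prop :=
  forall (U : lmodType k) (f : V -> W -> X -> U), trilin f ->
    \sum_(p <- s) f p.1.1 p.1.2 p.2 = \sum_(p <- t) f p.1.1 p.1.2 p.2.

Record hopf (A : algType k) := Hopf {
  hdelta : A -> seq (A * A);
  heps : A -> k;
  hS : A -> A;
  delta_lin : forall (c : k) (a b : A),
    teq (hdelta (c *: a + b)) ([seq (c *: p.1, p.2) | p <- hdelta a] ++ hdelta b);
  delta_mul : forall a b : A,
    teq (hdelta (a * b)) [seq (p.1 * q.1, p.2 * q.2) | p <- hdelta a, q <- hdelta b];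
  delta_one : teq (hdelta 1) [:: (1, 1)];
  coassoc : forall a : A,
    teq3 [seq ((q.1, q.2), p.2) | p <- hdelta a, q <- hdelta p.1]
         [seq ((p.1, q.1), q.2) | p <- hdelta a, q <- hdelta p.2];
  eps_lin : forall (c : k) (a b : A), heps (c *: a + b) = c * heps a + heps b;
  eps_mul : forall a b : A, heps (a * b) = heps a * heps b;
  eps_one : heps 1 = 1;
  counit_l : forall a : A, \sum_(p <- hdelta a) heps p.1 *: p.2 = a;
  counit_r : forall a : A, \sum_(p <- hdelta a) heps p.2 *: p.1 = a;
  S_lin : lin_map hS;
  antipode_l : forall a : A, \sum_(p <- hdelta a) hS p.1 * p.2 = (heps a)%:A;
  antipode_r : forall a : A, \sum_(p <- hdelta a) p.1 * hS p.2 = (heps a)%:A;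
  S_bij : bijective hS
}.

(* Hopf algebra maps (bialgebra maps; they then commute with antipodes) *)
Definition hopf_map (A H : algType k) (hA : hopf A) (hH : hopf H) (f : A -> H) : Prop :=
  [/\ lin_map f,
      (forall a b : A, f (a * b) = f a * f b),
      f 1 = 1,
      (forall a : A, teq (hdelta hH (f a)) [seq (f p.1, f p.2) | p <- hdelta hA a])
    & (forall a : A, heps hH (f a) = heps hA a)].

Definition hopf_subalg (A : algType k) (hA : hopf A) (C : A -> Prop) : Prop :=
  [/\ C 1,
      (forall (c : k) (a b : A), C a -> C b -> C (c *: a + b)),
      (forall a b : A, C a -> C b -> C (a * b)),
      (forall a : A, C a -> C (hS hA a))
    & (forall a : A, C a -> exists t : seq (A * A),
          (forall p, p \in t -> C p.1 /\ C p.2) /\ teq (hdelta hA a) t)].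

Definition central_set (A : algType k) (C : A -> Prop) : Prop :=
  forall c a : A, C c -> c * a = a * c.

Definition is_hopf_center (A : algType k) (hA : hopf A) (C : A -> Prop) : Prop :=
  [/\ hopf_subalg hA C, central_set C
    & forall D : A -> Prop, hopf_subalg hA D -> central_set D ->
        forall a, D a -> C a].

Definition exact_seq (B A H : algType k) (hB : hopf B) (hA : hopf A) (hH : hopf H)
    (iota : B -> A) (pi : A -> H) : Prop :=
  [/\ hopf_map hB hA iota, hopf_map hA hH pi & injective iota] /\
  [/\
      (forall h : H, exists a : A, pi a = h),
      (* Ker pi = A iota(B^+) *)
      (forall a : A, pi a = 0 <->
         exists s : seq (A * B), all (fun p => heps hB p.2 == 0) s /\
                                a = \sum_(p <- s) p.1 * iota p.2)
    & (* iota(B) = A^{co pi} = { a | (id (x) pi) Delta(a) = a (x) 1 } *)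
      (forall a : A, (exists b : B, a = iota b) <->
         teq [seq (p.1, pi p.2) | p <- hdelta hA a] [:: (a, (1 : H))])].

Definition central_seq (B A : algType k) (iota : B -> A) : Prop :=
  forall (b : B) (a : A), iota b * a = a * iota b.

Definition left_ideal (A : algType k) (I : A -> Prop) : Prop :=
  [/\ I 0, (forall x y, I x -> I y -> I (x + y)) & (forall a x, I x -> I (a * x))].
Definition right_ideal (A : algType k) (I : A -> Prop) : Prop :=
  [/\ I 0, (forall x y, I x -> I y -> I (x + y)) & (forall a x, I x -> I (x * a))].

Definition left_noetherian (A : algType k) : Prop :=
  forall I : nat -> A -> Prop, (forall n, left_ideal (I n)) ->
    (forall n x, I n x -> I n.+1 x) ->
    exists N, forall n, (N <= n)%N -> forall x, I n x -> I N x.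
Definition right_noetherian (A : algType k) : Prop :=
  forall I : nat -> A -> Prop, (forall n, right_ideal (I n)) ->
    (forall n x, I n x -> I n.+1 x) ->
    exists N, forall n, (N <= n)%N -> forall x, I n x -> I N x.
Definition noetherian (A : algType k) : Prop := left_noetherian A /\ right_noetherian A.

End Defs.

(* Main.v *)
Require Import Defs.
From HB Require Import structures.
From mathcomp Require Import all_boot all_order all_algebra.
Import GRing.Theory.
Local Open Scope ring_scope.
Set Implicit Arguments. Unset Strict Implicit.

Section Helpers.
Variable k : fieldType.

Section Lin.
Variables (V W : lmodType k) (f : V -> W).
Hypothesis hf : lin_map f.
Lemma lin0 : f 0 = 0.
Proof.
have h := hf 1 0 0; rewrite !scale1r addr0 in h.
by apply: (addrI (f 0)); rewrite addr0 -h.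
Qed.
Lemma linD x y : f (x + y) = f x + f y.
Proof. by have := hf 1 x y; rewrite !scale1r. Qed.
Lemma linZ c x : f (c *: x) = c *: f x.
Proof. by have := hf c x 0; rewrite !addr0 lin0 addr0. Qed.
Lemma lin_sum (I : Type) (s : seq I) (P : pred I) (F : I -> V) :
  f (\sum_(i <- s | P i) F i) = \sum_(i <- s | P i) f (F i).
Proof. exact: (big_morph _ linD lin0). Qed.
End Lin.

Lemma teq_map (V W V' W' : lmodType k) (phi : V -> V') (psi : W -> W') s t :
  lin_map phi -> lin_map psi -> teq s t ->
  teq [seq (phi p.1, psi p.2) | p <- s] [seq (phi p.1, psi p.2) | p <- t].
Proof.
move=> hphi hpsi h U g [g1 g2]; rewrite !big_map /=.
apply: (h U (fun x y => g (phi x) (psi y))).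
split=> [y|x] c u v /=.
  by rewrite hphi; exact: g1.
by rewrite hpsi; exact: g2.
Qed.

Lemma eps0 (A : algType k) (hA : hopf A) : heps hA 0 = 0.
Proof.
have h := eps_lin hA 1 0 0; rewrite scale1r addr0 mul1r in h.
by apply: (addrI (heps hA 0)); rewrite addr0 -h.
Qed.

Lemma epsA (A : algType k) (hA : hopf A) c : heps hA (c%:A) = c.
Proof. by have := eps_lin hA c 1 0; rewrite addr0 eps0 addr0 eps_one mulr1. Qed.

Lemma hopf_map_S (A H : algType k) (hA : hopf A) (hH : hopf H) f :
  hopf_map hA hH f -> forall a, hS hH (f a) = f (hS hA a).
Proof.
case=> fl fM f1 fD fe a.
have SHl := S_lin hH; have SAl := S_lin hA.
have conv1 : forall x, \sum_(p <- hdelta hA x) hS hH (f p.1) * f p.2 = (heps hA x)%:A.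
  move=> x.
  transitivity (\sum_(p <- hdelta hH (f x)) hS hH p.1 * p.2); last by rewrite antipode_l fe.
  rewrite (fD x H (fun u v => hS hH u * v)) ?big_map //.
  split=> [y|u] c u1 v1 /=; first by rewrite SHl mulrDl scalerAl.
  by rewrite mulrDr scalerAr.
have conv2 : forall x, \sum_(p <- hdelta hA x) f p.1 * f (hS hA p.2) = (heps hA x)%:A.
  move=> x; under eq_bigr => p _ do rewrite -fM.
  by rewrite -(lin_sum fl) antipode_r (linZ fl) f1.
have tri : trilin (fun x y z => hS hH (f x) * f y * f (hS hA z)).
  split; last split.
  - move=> y z c u v /=; by rewrite fl SHl !mulrDl !scalerAl.
  - move=> x z c u v /=; by rewrite fl mulrDr mulrDl scalerAl scalerAr.
  - move=> x y c u v /=; by rewrite SAl fl mulrDr scalerAr.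
have := coassoc hA a tri.
rewrite !big_allpairs_dep /= => h.
have eL : \sum_(p <- hdelta hA a) \sum_(q <- hdelta hA p.1)
    hS hH (f q.1) * f q.2 * f (hS hA p.2) = f (hS hA a).
  under eq_bigr => p _ do rewrite -mulr_suml conv1 mulr_algl -(linZ fl) -(linZ SAl).
  by rewrite -(lin_sum fl) -(lin_sum SAl) counit_l.
have eR : \sum_(p <- hdelta hA a) \sum_(q <- hdelta hA p.2)
    hS hH (f p.1) * f q.1 * f (hS hA q.2) = hS hH (f a).
  under eq_bigr => p _ do
    (under eq_bigr => q _ do rewrite -mulrA; rewrite -mulr_sumr conv2 mulr_algr
     -(linZ SHl) -(linZ fl)).
  by rewrite -(lin_sum SHl) -(lin_sum fl) counit_r.
by rewrite -eL -eR h.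
Qed.

End Helpers.

Theorem corollary2p12 (k : fieldType) (B A H : algType k)
    (hB : hopf B) (hA : hopf A) (hH : hopf H) (iota : B -> A) (pi : A -> H) :
  exact_seq hB hA hH iota pi ->
  central_seq iota ->
  noetherian A ->
  is_hopf_center hH (fun h : H => exists c : k, h = c%:A) ->
  is_hopf_center hA (fun a : A => exists b : B, a = iota b).
Proof.
move=> [[iH piH iinj] [pisurj piker coinv]] cent _ hzH.
have iS := hopf_map_S iH.
have piS := hopf_map_S piH.
have Bsub : hopf_subalg hA (fun a : A => exists b : B, a = iota b).
  case: iH => il iM i1 iD ie.
  split.
  - by exists 1; rewrite i1.
  - by move=> c _ _ [b1 ->] [b2 ->]; exists (c *: b1 + b2); rewrite il.
  - by move=> _ _ [b1 ->] [b2 ->]; exists (b1 * b2); rewrite iM.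
  - by move=> _ [b ->]; exists (hS hB b); exact: iS.
  - move=> _ [b ->]; exists [seq (iota p.1, iota p.2) | p <- hdelta hB b].
    split; last exact: iD.
    by move=> p /mapP [q _ ->]; split; [exists q.1 | exists q.2].
split => //.
  by move=> _ a [b ->]; exact: cent.
move=> D Dsub Dcent a Da.
case: (piH) => pl pM p1 pD pe.
have piD : forall x, D x -> pi x = (heps hA x)%:A.
  move=> x Dx; case: hzH => _ _ hmax.
  have [c hc] : exists c, pi x = c%:A.
    apply: (hmax (fun h => exists y, D y /\ h = pi y)); last by exists x.
    + case: Dsub => D1 DL DM DS DD.
      split.
      * by exists 1; rewrite p1.
      * move=> c _ _ [y1 [Dy1 ->]] [y2 [Dy2 ->]]; exists (c *: y1 + y2).
        by split; [exact: DL | rewrite pl].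
      * move=> _ _ [y1 [Dy1 ->]] [y2 [Dy2 ->]]; exists (y1 * y2).
        by split; [exact: DM | rewrite pM].
      * move=> _ [y [Dy ->]]; exists (hS hA y).
        by split; [exact: DS | exact: piS].
      * move=> _ [y [Dy ->]]; have [t [tD tE]] := DD y Dy.
        exists [seq (pi p.1, pi p.2) | p <- t]; split.
          move=> p /mapP [q qt ->]; have [Dq1 Dq2] := tD q qt.
          by split; [exists q.1 | exists q.2].
        move=> U g gb; rewrite (pD y U g gb).
        exact: (teq_map pl pl tE) U g gb.
    + move=> _ h [y [Dy ->]]; have [a' <-] := pisurj h.
      by rewrite -!pM Dcent.
  by have := pe x; rewrite hc epsA => ->.
apply/coinv.
case: Dsub => _ _ _ _ DD; have [t [tD tE]] := DD a Da.
move=> U g [g1 g2]; rewrite big_cons big_nil addr0 big_map /=.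
rewrite (tE U (fun x y => g x (pi y))); last first.
  split=> [y|x] c u v /=; first exact: g1.
  by rewrite pl; exact: g2.
rewrite big_seq.
under eq_bigr => p pt do rewrite (piD _ (tD p pt).2) (linZ (g2 _)) -(linZ (g1 _)).
rewrite -(lin_sum (g1 _)) -big_seq.
rewrite -(tE A (fun x y => heps hA y *: x)) ?counit_r //.
split=> [y|x] c u v /=.
  by rewrite scalerDr !scalerA mulrC.
by rewrite eps_lin scalerDl scalerA.
Qed.
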